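(* Let $n\ge 2$. The completely isolated subsemigroups of $\mathcal{I}^{\ast}_n$ are exactly $\mathcal{I}^{\ast}_n$, $\mathcal{S}_n$ and $\mathcal{I}^{\ast}_n\setminus\mathcal{S}_n$.
   Context: Let $X=\{1,\dots,n\}$, $X'=\{1',\dots,n'\}$. $\mathcal{I}^{\ast}_n$ is the set of partitions of $X\cup X'$ all of whose blocks meet both $X$ and $X'$, with product: regard $\alpha$ as a partition of $X\cup X''$ and $\beta$ as a partition of $X''\cup X'$ ($X''$ a third copy of $X$), and let $\alpha\beta$ be the partition of $X\cup X'$ induced by the equivalence on $X\cup X''\cup X'$ generated by the blocks of both. $\mathcal{S}_n$ is its group of units: the elements all of whose blocks are $\{x,\pi(x)'\}$ for a permutation $\pi$ of $X$. A subsemigroup $T$ of a semigroup $S$ is completely isolated if for all $a,b\in S$, $ab\in T$ implies $a\in T$ or $b\in T$. *)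

(* Defs.v *)
From mathcomp Require Import all_boot all_fingroup.
Set Warnings "-notation-overridden".
Set Implicit Arguments. Unset Strict Implicit. Unset Printing Implicit Defensive.

(* X ∪ X' encoded as 'I_n + 'I_n : inl i = i ∈ X, inr i = i' ∈ X'. *)
Definition pt (n : nat) : finType := ('I_n + 'I_n)%type.

(* X ∪ X'' ∪ X' encoded as ('I_n + 'I_n) + 'I_n :
   inl (inl i) = i ∈ X, inl (inr i) = i'' ∈ X'', inr i = i' ∈ X'. *)
Definition pt3 (n : nat) : finType := (('I_n + 'I_n) + 'I_n)%type.

Definition is_dsim (n : nat) (P : {set {set pt n}}) : bool :=
  partition P [set: pt n] &&
  [forall B in P, [exists i : 'I_n, (inl i : pt n) \in B]
               && [exists j : 'I_n, (inr j : pt n) \in B]].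

Definition Istar (n : nat) : {set {set {set pt n}}} := [set P | is_dsim P].

(* alpha viewed on X ∪ X'', beta viewed on X'' ∪ X' *)
Definition embL (n : nat) (u : pt n) : pt3 n :=
  match u with inl i => inl (inl i) | inr i => inl (inr i) end.
Definition embR (n : nat) (u : pt n) : pt3 n :=
  match u with inl i => inl (inr i) | inr i => inr i end.
Definition embO (n : nat) (u : pt n) : pt3 n :=
  match u with inl i => inl (inl i) | inr i => inr i end.

Arguments embL {n}. Arguments embR {n}. Arguments embO {n}.

Definition prod_rel (n : nat) (a b : {set {set pt n}}) : rel (pt3 n) :=
  fun x y =>
    [exists B in a, (x \in embL @: B) && (y \in embL @: B)] ||
    [exists B in b, (x \in embR @: B) && (y \in embR @: B)].

(* the product: partition of X ∪ X' induced by the generated equivalence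
   (reflexive-transitive closure of the symmetric relation prod_rel) *)
Definition dmul (n : nat) (a b : {set {set pt n}}) : {set {set pt n}} :=
  [set [set v : pt n | connect (prod_rel a b) (embO u) (embO v)] | u : pt n].

Definition Sn (n : nat) : {set {set {set pt n}}} :=
  [set P | [exists s : {perm 'I_n},
     P == [set [set (inl x : pt n); inr (s x)] | x : 'I_n]]].

Definition subsemigroup (n : nat) (T : {set {set {set pt n}}}) : Prop :=
  T \subset Istar n /\ T != set0 /\
  (forall a b, a \in T -> b \in T -> dmul a b \in T).

Definition completely_isolated (n : nat) (T : {set {set {set pt n}}}) : Prop :=
  subsemigroup T /\
  (forall a b, a \in Istar n -> b \in Istar n ->
     dmul a b \in T -> a \in T \/ b \in T).

(* Main.v *)
Require Import Defs.
From mathcomp Require Import all_boot all_fingroup.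
Set Implicit Arguments. Unset Strict Implicit. Unset Printing Implicit Defensive.


Section Gen.
Variable T : finType.

Definition EP (R : rel T) := equivalence_partition R setT.

Lemma eqrel_of (R : rel T) : reflexive R -> symmetric R -> transitive R ->
  {in setT & &, equivalence_rel R}.
Proof.
move=> Rr Rs Rt x y z _ _ _; split; first exact: Rr.
move=> Rxy; apply/idP/idP => H; first by apply: Rt H; rewrite Rs.
exact: Rt Rxy H.
Qed.

Lemma EP_part R : reflexive R -> symmetric R -> transitive R -> partition (EP R) setT.
Proof. by move=> *; apply: equivalence_partitionP; apply: eqrel_of. Qed.

Lemma EP_sb R : reflexive R -> symmetric R -> transitive R ->
  forall u v, (v \in pblock (EP R) u) = R u v.
Proof.
by move=> r s t u v; apply: pblock_equivalence_partition; rewrite ?inE //; apply: eqrel_of.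
Qed.

Definition sb (P : {set {set T}}) u v := v \in pblock P u.

Lemma sb_refl P : partition P setT -> forall u, sb P u u.
Proof. by move=> /and3P[/eqP cP _ _] u; rewrite /sb mem_pblock cP inE. Qed.

Lemma sb_sym P : partition P setT -> forall u v, sb P u v = sb P v u.
Proof.
move=> pP; have [/eqP cP tP _] := and3P pP.
move=> u v; rewrite /sb -!eq_pblock ?cP ?inE //; apply/eqP/eqP; by move->.
Qed.

Lemma sb_trans P : partition P setT -> forall u v w, sb P u v -> sb P v w -> sb P u w.
Proof.
move=> pP; have [/eqP cP tP _] := and3P pP.
move=> u v w; rewrite /sb -!eq_pblock ?cP ?inE // => /eqP-> /eqP->; done.
Qed.

Lemma part_eq P Q : partition P setT -> partition Q setT ->
  (forall u v, sb P u v = sb Q u v) -> P = Q.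
Proof.
move=> pP pQ H.
have key: forall P Q, partition P setT -> partition Q setT ->
  (forall u v, sb P u v = sb Q u v) -> P \subset Q.
  move=> P1 Q1 pP1 pQ1 H1; apply/subsetP => B BP.
  have [/eqP cP tP nP] := and3P pP1; have [/eqP cQ tQ nQ] := and3P pQ1.
  have /set0Pn [u uB] : B != set0 by apply: contraNneq nP => <-.
  have -> : B = pblock Q1 u.
    rewrite -(def_pblock tP BP uB); apply/setP => v; exact: H1.
  by apply: pblock_mem; rewrite cQ inE.
by apply/eqP; rewrite eqEsubset !key // => u v; rewrite H.
Qed.

End Gen.
Lemma sb_transT (T : finType) (P : {set {set T}}) : partition P setT -> transitive (sb P).
Proof. by move=> pP v u w; apply: sb_trans. Qed.
Arguments sb_trans {T P} _ {u v w}.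

Section P.
Variable n : nat.
Local Notation pt := (pt n).
Local Notation pt3 := (pt3 n).

Lemma IstarP (P : {set {set pt}}) : reflect (partition P setT /\
   forall u, (exists i, sb P u (inl i)) /\ (exists j, sb P u (inr j))) (P \in Istar n).
Proof.
rewrite inE /is_dsim; apply: (iffP andP) => [[pP /forall_inP H]|[pP H]]; split => //.
  have [/eqP cP tP _] := and3P pP.
  move=> u; have /H /andP[/existsP[i Hi] /existsP[j Hj]] : pblock P u \in P.
    by apply: pblock_mem; rewrite cP inE.
  by split; [exists i | exists j].
have [/eqP cP tP nP] := and3P pP.
apply/forall_inP => B BP.
have /set0Pn [u uB] : B != set0 by apply: contraNneq nP => <-.
have eB := def_pblock tP BP uB.
have [[i Hi] [j Hj]] := H u.
by apply/andP; split; apply/existsP; [exists i | exists j]; rewrite -eB.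
Qed.

Lemma Istar_part P : P \in Istar n -> partition P setT.
Proof. by case/IstarP. Qed.

Lemma prod_rel_sym (a b : {set {set pt}}) : symmetric (prod_rel a b).
Proof.
move=> x y; rewrite /prod_rel; congr (_ || _); apply: eq_existsb => B; by rewrite [X in _ && X]andbC.
Qed.

Definition DR (a b : {set {set pt}}) (u v : pt) := connect (prod_rel a b) (embO u) (embO v).

Lemma DR_refl (a b : {set {set pt}}) : reflexive (DR a b).
Proof. by move=> u; apply: connect0. Qed.
Lemma DR_sym (a b : {set {set pt}}) : symmetric (DR a b).
Proof. by move=> u v; rewrite /DR (sym_connect_sym (@prod_rel_sym a b)). Qed.
Lemma DR_trans (a b : {set {set pt}}) : transitive (DR a b).
Proof. by move=> v u w; rewrite /DR; apply: connect_trans. Qed.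

Lemma dmul_EP (a b : {set {set pt}}) : dmul a b = EP (DR a b).
Proof.
rewrite /dmul /EP /equivalence_partition; apply/setP => B.
apply/imsetP/imsetP => [[u _ ->]|[u _ ->]]; exists u => //;
  by apply/setP => v; rewrite !inE.
Qed.

Lemma dmul_part (a b : {set {set pt}}) : partition (dmul a b) setT.
Proof. rewrite dmul_EP; apply: EP_part; [apply DR_refl|apply DR_sym|apply DR_trans]. Qed.

Lemma dmul_sb (a b : {set {set pt}}) u v : sb (dmul a b) u v = DR a b u v.
Proof. rewrite dmul_EP /sb EP_sb //; [apply DR_refl|apply DR_sym|apply DR_trans]. Qed.

Lemma embL_inj : injective (@embL n).
Proof. by case=> x [] y //= []->. Qed.
Lemma embR_inj : injective (@embR n).
Proof. by case=> x [] y //= []->. Qed.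

Lemma stepL (a b : {set {set pt}}) u v : partition a setT -> sb a u v -> prod_rel a b (embL u) (embL v).
Proof.
move=> pa h; have [/eqP ca ta _] := and3P pa.
apply/orP; left; apply/exists_inP; exists (pblock a u).
  by apply: pblock_mem; rewrite ca inE.
rewrite !imset_f //; apply: sb_refl pa u.
Qed.

Lemma stepR (a b : {set {set pt}}) u v : partition b setT -> sb b u v -> prod_rel a b (embR u) (embR v).
Proof.
move=> pb h; have [/eqP cb tb _] := and3P pb.
apply/orP; right; apply/exists_inP; exists (pblock b u).
  by apply: pblock_mem; rewrite cb inE.
rewrite !imset_f //; apply: sb_refl pb u.
Qed.

Lemma step_inv (a b : {set {set pt}}) x y : partition a setT -> partition b setT -> prod_rel a b x y ->
  (exists u v, [/\ x = embL u, y = embL v & sb a u v]) \/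
  (exists u v, [/\ x = embR u, y = embR v & sb b u v]).
Proof.
move=> pa pb; have [_ ta _] := and3P pa; have [_ tb _] := and3P pb.
case/orP => /exists_inP [B BP /andP[/imsetP[u uB ->] /imsetP[v vB ->]]].
  by left; exists u, v; split => //; rewrite /sb (def_pblock ta BP uB).
by right; exists u, v; split => //; rewrite /sb (def_pblock tb BP uB).
Qed.

Lemma dmul_Istar (a b : {set {set pt}}) : a \in Istar n -> b \in Istar n -> dmul a b \in Istar n.
Proof.
move=> /IstarP [pa Ha] /IstarP [pb Hb]; apply/IstarP; split; first exact: dmul_part.
move=> u; rewrite /sb.
have HL: forall i, exists j, DR a b (inl i) (inr j).
  move=> i; have [_ [k hk]] := Ha (inl i); have [_ [j hj]] := Hb (inl k).
  exists j; apply: (@connect_trans _ _ (embR (inl k))).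
    by apply: connect1; apply: (stepL b pa hk).
  by apply: connect1; apply: (stepR a pb hj).
have HR: forall j, exists i, DR a b (inr j) (inl i).
  move=> j; have [[k hk] _] := Hb (inr j); have [[i hi] _] := Ha (inr k).
  exists i; apply: (@connect_trans _ _ (embR (inl k))).
    by apply: connect1; apply: (stepR a pb hk).
  by apply: connect1; apply: (stepL b pa hi).
case: u => [i|j]; split.
- by exists i; rewrite -/(sb _ _ _) dmul_sb DR_refl.
- by have [j hj] := HL i; exists j; rewrite -/(sb _ _ _) dmul_sb.
- by have [i hi] := HR j; exists i; rewrite -/(sb _ _ _) dmul_sb.
- by exists j; rewrite -/(sb _ _ _) dmul_sb DR_refl.
Qed.

End P.

Lemma connect_char (T1 T2 : finType) (e : rel T1) (S : rel T2) (h : T1 -> T2) (g : T2 -> T1) :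
  reflexive S -> symmetric S -> transitive S -> symmetric e ->
  (forall x y, e x y -> S (h x) (h y)) ->
  (forall x, connect e x (g (h x))) ->
  (forall u v, S u v -> connect e (g u) (g v)) ->
  forall x y, connect e x y = S (h x) (h y).
Proof.
move=> Sr Ss St es H1 H2 H3 x y; apply/idP/idP.
  case/connectP => p; elim: p x => [|z p IH] x /=; first by move=> _ ->.
  case/andP => exz pz ey; apply: St (H1 _ _ exz) _; exact: IH.
move=> hS; apply: connect_trans (H2 x) _; apply: connect_trans (H3 _ _ hS) _.
by rewrite (sym_connect_sym es) H2.
Qed.

Section P.
Local Open Scope group_scope.
Variable n : nat.
Local Notation pt := (pt n).

Definition elem (s : {perm 'I_n}) : {set {set pt}} :=
  [set [set (inl x : pt); inr (s x)] | x : 'I_n].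
Definition key (s : {perm 'I_n}) (u : pt) : 'I_n :=
  match u with inl x => x | inr y => s^-1 y end.
Definition KR s : rel pt := fun u v => key s u == key s v.

Lemma KR_refl s : reflexive (KR s). Proof. by move=> u; rewrite /KR. Qed.
Lemma KR_sym s : symmetric (KR s). Proof. by move=> u v; rewrite /KR eq_sym. Qed.
Lemma KR_trans s : transitive (KR s). Proof. by move=> v u w; rewrite /KR => /eqP-> . Qed.

Lemma elem_EP s : elem s = EP (KR s).
Proof.
rewrite /elem /EP /equivalence_partition; apply/setP => B.
have E : forall x, [set (inl x : pt); inr (s x)] = [set y in setT | KR s (inl x) y].
  move=> x; apply/setP => [[y|y]]; rewrite !inE /KR /=.
    by rewrite orbF; apply/eqP/eqP => [[]->|->].
  apply/eqP/eqP => [[]->|->]; by rewrite ?permK ?permKV.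
apply/imsetP/imsetP => [[x _ ->]|[u _ ->]]; first by exists (inl x) => //.
case: u => [x|y]; first by exists x.
exists (s^-1 y) => //; rewrite E; apply/setP => w; rewrite !inE /KR /=.
by rewrite eq_sym.
Qed.

Lemma elem_part s : partition (elem s) setT.
Proof. rewrite elem_EP; apply: EP_part; [apply KR_refl|apply KR_sym|apply KR_trans]. Qed.

Lemma elem_sb s u v : sb (elem s) u v = (key s u == key s v).
Proof. rewrite elem_EP /sb EP_sb //; [apply KR_refl|apply KR_sym|apply KR_trans]. Qed.

Lemma elem_Istar s : elem s \in Istar n.
Proof.
apply/IstarP; split; first exact: elem_part.
move=> u; split.
  by exists (key s u); rewrite elem_sb.
by exists (s (key s u)); rewrite elem_sb /= permK.
Qed.

Lemma SnP P : reflect (exists s, P = elem s) (P \in Sn n).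
Proof.
rewrite inE; apply: (iffP existsP) => [[s /eqP->]|[s ->]]; by exists s.
Qed.

Definition phiL (s : {perm 'I_n}) (u : pt) : pt :=
  match u with inl x => inl (s x) | inr y => inr y end.
Definition psiR (t : {perm 'I_n}) (u : pt) : pt :=
  match u with inl x => inl x | inr y => inr (t^-1 y) end.

Lemma LU s P u v : partition P setT ->
  sb (dmul (elem s) P) u v = sb P (phiL s u) (phiL s v).
Proof.
move=> pP; rewrite dmul_sb /DR.
pose h (x : pt3 n) : pt := match x with inl (inl x) => inl (s x) | inl (inr y) => inl y
   | inr z => inr z end.
have -> : phiL s u = h (embO u) by case: u.
have -> : phiL s v = h (embO v) by case: v.
apply: (connect_char (g := @embR n)).
- exact: sb_refl. - exact: sb_sym. - exact: sb_transT. - exact: prod_rel_sym.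
- move=> x y /(step_inv (elem_part s) pP) [[u1 [v1 [-> -> H]]]|[u1 [v1 [-> -> H]]]].
    have E: forall w, h (embL w) = inl (s (key s w)) by case=> w //=; rewrite permKV.
    by rewrite !E; rewrite elem_sb in H; rewrite (eqP H); apply: sb_refl.
  by case: u1 H; case: v1.
- case=> [[x|y]|z] /=; try exact: connect0.
  apply: connect1; have -> : (inl (inl x) : pt3 n) = embL (inl x) by [].
  have -> : (inl (inr (s x)) : pt3 n) = embL (inr (s x)) by [].
  by apply: stepL (elem_part s) _; rewrite elem_sb /= permK.
- by move=> u1 v1 H; apply: connect1; apply: stepR.
Qed.

Lemma RU t P u v : partition P setT ->
  sb (dmul P (elem t)) u v = sb P (psiR t u) (psiR t v).
Proof.
move=> pP; rewrite dmul_sb /DR.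
pose h (x : pt3 n) : pt := match x with inl (inl x) => inl x | inl (inr y) => inr y
   | inr z => inr (t^-1 z) end.
have -> : psiR t u = h (embO u) by case: u.
have -> : psiR t v = h (embO v) by case: v.
apply: (connect_char (g := @embL n)).
- exact: sb_refl. - exact: sb_sym. - exact: sb_transT. - exact: prod_rel_sym.
- move=> x y /(step_inv pP (elem_part t)) [[u1 [v1 [-> -> H]]]|[u1 [v1 [-> -> H]]]].
    by case: u1 H; case: v1.
  have E: forall w, h (embR w) = inr (key t w) by case=> w.
  by rewrite !E; rewrite elem_sb in H; rewrite (eqP H); apply: sb_refl.
- case=> [[x|y]|z] /=; try exact: connect0.
  apply: connect1; have -> : (inr z : pt3 n) = embR (inr z) by [].
  have -> : (inl (inr (t^-1 z)) : pt3 n) = embR (inl (t^-1 z)) by [].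
  by apply: stepR (elem_part t) _; rewrite elem_sb.
- by move=> u1 v1 H; apply: connect1; apply: stepL.
Qed.

End P.

Section P.
Local Open Scope group_scope.
Variable n : nat.
Local Notation pt := (pt n).

Lemma elem_mul (s t : {perm 'I_n}) : dmul (elem s) (elem t) = elem (s * t).
Proof.
apply: part_eq; [exact: dmul_part | exact: elem_part |] => u v.
rewrite LU ?elem_part // !elem_sb.
have E : forall w, key t (phiL s w) = s (key (s * t) w).
  by case=> w //=; rewrite invMg permM permKV.
by rewrite !E (inj_eq perm_inj).
Qed.

Definition chi (g : {perm 'I_n}) (u : pt) : pt :=
  match u with inl x => inl (g x) | inr y => inr (g y) end.

Lemma conj_sb g (a : {set {set pt}}) u v : partition a setT ->
  sb (dmul (dmul (elem g) a) (elem g^-1)) u v = sb a (chi g u) (chi g v).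
Proof.
move=> pa; rewrite RU ?dmul_part // LU //.
have E : forall w, phiL g (psiR g^-1 w) = chi g w by case=> w //=; rewrite invgK.
by rewrite !E.
Qed.

Lemma conj_Istar g a : a \in Istar n -> dmul (dmul (elem g) a) (elem g^-1) \in Istar n.
Proof. by move=> h; rewrite !dmul_Istar ?elem_Istar. Qed.

Lemma conj_inv g (a : {set {set pt}}) : partition a setT ->
  dmul (dmul (elem g^-1) (dmul (dmul (elem g) a) (elem g^-1))) (elem g) = a.
Proof.
move=> pa; apply: part_eq => //; first exact: dmul_part.
move=> u v; rewrite -[X in dmul _ (elem X)](invgK g) conj_sb ?dmul_part // conj_sb //.
have E : forall w, chi g (chi g^-1 w) = w by case=> w /=; rewrite permKV.
by rewrite !E.
Qed.

Lemma left_inv s (b : {set {set pt}}) : partition b setT ->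
  dmul (elem s^-1) (dmul (elem s) b) = b.
Proof.
move=> pb; apply: part_eq => //; first exact: dmul_part.
move=> u v; rewrite LU ?dmul_part // LU //.
have E : forall w, phiL s (phiL s^-1 w) = w by case=> w /=; rewrite ?permKV.
by rewrite !E.
Qed.

Lemma unit_char P : P \in Istar n ->
  (forall i j, sb P (inl i) (inl j) -> i = j) -> P \in Sn n.
Proof.
move=> /IstarP [pP HP] Hinj.
have Hf : forall i, {j : 'I_n | sb P (inl i) (inr j)}.
  move=> i; apply: sigW; exact: (proj2 (HP (inl i))).
pose f i := sval (Hf i).
have fP : forall i, sb P (inl i) (inr (f i)) by move=> i; rewrite /f; case: (Hf i).
have finj : injective f.
  move=> i j eij; apply: Hinj; apply: (sb_trans pP (fP i)).
  by rewrite sb_sym // eij; apply: fP.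
apply/SnP; exists (perm finj).
set s := perm finj.
have sE : forall i, s i = f i by move=> i; rewrite permE.
apply: part_eq => //; first exact: elem_part.
have R : forall u, sb P u (inl (key s u)).
  case=> [x|y] /=; first exact: sb_refl.
  rewrite sb_sym //; have := fP (s^-1 y); by rewrite -sE permKV.
move=> u v; rewrite elem_sb; apply/idP/idP.
  move=> h; apply/eqP; apply: Hinj.
  apply: (sb_trans pP _ (R v)); apply: (sb_trans pP _ h); by rewrite sb_sym // R.
move/eqP => e; apply: (sb_trans pP (R u)); by rewrite e sb_sym // R.
Qed.

Lemma unit_l a b : a \in Istar n -> b \in Istar n -> dmul a b \in Sn n -> a \in Sn n.
Proof.
move=> aI bI /SnP [t et]; apply: unit_char => // i j h.
have : sb (dmul a b) (inl i) (inl j).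
  rewrite dmul_sb; apply: connect1.
  have -> : (embO (inl i) : pt3 n) = embL (inl i) by [].
  have -> : (embO (inl j) : pt3 n) = embL (inl j) by [].
  by apply: stepL => //; apply: Istar_part.
by rewrite et elem_sb => /eqP.
Qed.

Lemma unit_r a b : a \in Istar n -> b \in Istar n -> dmul a b \in Sn n -> b \in Sn n.
Proof.
move=> aI bI ab; have := unit_l aI bI ab => /SnP [s es].
move: ab => /SnP [t et].
rewrite -(left_inv s (Istar_part bI)) -es et elem_mul; apply/SnP; by eexists.
Qed.

End P.

Section P.
Local Open Scope group_scope.
Variable n : nat.
Local Notation pt := (pt n).

Definition z0 : {set {set pt}} := EP (fun _ _ : pt => true).

Lemma z0_part : partition z0 setT.
Proof. by apply: EP_part. Qed.
Lemma z0_sb u v : sb z0 u v.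
Proof. by rewrite /sb /z0 EP_sb. Qed.

Lemma z0_Istar : 0 < n -> z0 \in Istar n.
Proof.
move=> n0; apply/IstarP; split; first exact: z0_part.
by move=> u; split; [exists (Ordinal n0) | exists (Ordinal n0)]; rewrite z0_sb.
Qed.

Lemma z0_Sn : 1 < n -> z0 \notin Sn n.
Proof.
move=> n1; apply/negP => /SnP [s es].
have n0 : 0 < n by apply: ltnW.
have := z0_sb (inl (Ordinal n0)) (inl (Ordinal n1)); rewrite es elem_sb /=.
by move/eqP => [].
Qed.

Lemma Sn_Istar P : P \in Sn n -> P \in Istar n.
Proof. by case/SnP => s ->; apply: elem_Istar. Qed.

Definition mu (P : {set {set pt}}) :=
  #|[set p : 'I_n * 'I_n | ~~ sb P (inl p.1) (inl p.2)]|.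

Lemma mu0 P : P \in Istar n -> mu P = 0 -> P = z0.
Proof.
move=> /IstarP [pP HP] /eqP; rewrite cards_eq0 => /eqP E.
have H : forall i j, sb P (inl i) (inl j).
  move=> i j; apply/negPn/negP => h.
  have : (i, j) \in [set p : 'I_n * 'I_n | ~~ sb P (inl p.1) (inl p.2)] by rewrite inE.
  by rewrite E inE.
apply: part_eq => // [|u v]; first exact: z0_part.
rewrite z0_sb; have [[i hi] _] := HP u; have [[j hj] _] := HP v.
apply: (sb_trans pP hi); apply: (sb_trans pP (H i j)); by rewrite sb_sym.
Qed.

Lemma perm2 (p q k l : 'I_n) : p != q -> k != l ->
  exists g : {perm 'I_n}, g p = k /\ g q = l.
Proof.
move=> pq kl; set q' := tperm p k q.
exists (tperm p k * tperm q' l); rewrite !permM tpermL; split; last by rewrite tpermL.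
rewrite tpermD //.
apply: contraNneq pq => e; apply/eqP; apply: (@perm_inj _ (tperm p k)).
by rewrite tpermL -/q' e.
by rewrite eq_sym.
Qed.

Definition cj (g : {perm 'I_n}) a := dmul (dmul (elem g) a) (elem g^-1).

Lemma nonunit_pair a : a \in Istar n -> a \notin Sn n ->
  exists k l, k != l /\ sb a (inl k) (inl l).
Proof.
move=> aI aS.
case: (boolP [exists k, exists l, (k != l) && sb a (inl k) (inl l)]).
  by case/existsP => k /existsP [l /andP[h1 h2]]; exists k, l.
move=> h; case/negP: aS; apply: unit_char => // i j hij.
apply/eqP; apply: contraNT h => ne; apply/existsP; exists i; apply/existsP; exists j.
by rewrite ne.
Qed.

Lemma reduce x a : x \in Istar n -> a \in Istar n -> a \notin Sn n -> 0 < mu x ->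
  exists g, mu (dmul x (cj g a)) < mu x.
Proof.
move=> xI aI aS; rewrite card_gt0 => /set0Pn [[i j]]; rewrite inE /= => hij.
have [pa Ha] := IstarP _ aI; have [px Hx] := IstarP _ xI.
have [_ [p hp]] := Hx (inl i); have [_ [q hq]] := Hx (inl j).
have pq : p != q.
  apply: contraNneq hij => e; apply: (sb_trans px hp); by rewrite e sb_sym.
have [k [l [kl hkl]]] := nonunit_pair aI aS.
have [g [gp gq]] := perm2 pq kl.
exists g; apply: proper_card; apply/properP; split.
  apply/subsetP => [[i' j']]; rewrite !inE /=; apply: contra => h.
  rewrite dmul_sb; apply: connect1.
  have -> : (embO (inl i') : pt3 n) = embL (inl i') by [].
  have -> : (embO (inl j') : pt3 n) = embL (inl j') by [].
  exact: stepL.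
exists (i, j); first by rewrite inE.
rewrite inE /= negbK dmul_sb.
have hc : sb (cj g a) (inl p) (inl q) by rewrite /cj conj_sb //= gp gq.
have cp : partition (cj g a) setT by apply: dmul_part.
apply: (@connect_trans _ _ (embL (inr p))).
  by apply: connect1; apply: stepL px hp.
apply: (@connect_trans _ _ (embL (inr q))).
  have -> : (embL (inr p) : pt3 n) = embR (inl p) by [].
  have -> : (embL (inr q) : pt3 n) = embR (inl q) by [].
  by apply: connect1; apply: stepR cp hc.
have -> : (embO (inl j) : pt3 n) = embL (inl j) by [].
apply: connect1; apply: (stepL _ px); by rewrite sb_sym.
Qed.

End P.

Section Part.
Local Open Scope group_scope.
Variable n : nat.
Local Notation pt := (pt n).
Variable T : {set {set {set pt}}}.
Hypothesis TI : T \subset Istar n.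
Hypothesis Tmul : forall a b, a \in T -> b \in T -> dmul a b \in T.
Hypothesis Tiso : forall a b, a \in Istar n -> b \in Istar n ->
     dmul a b \in T -> a \in T \/ b \in T.

Lemma mul_part a b : a \in Istar n -> b \in Istar n -> (a \in T) = (b \in T) ->
  (dmul a b \in T) = (a \in T).
Proof.
move=> aI bI e; case aT: (a \in T).
  by apply: Tmul; rewrite // -e.
apply/negbTE/negP => h; have [] := Tiso aI bI h; by rewrite ?aT -?e ?aT.
Qed.

Lemma pow_part (s : {perm 'I_n}) k : (elem (s ^+ k.+1) \in T) = (elem s \in T).
Proof.
elim: k => [|k IH]; first by rewrite expg1.
by rewrite expgSr -elem_mul mul_part ?elem_Istar.
Qed.

Lemma unit_part (s : {perm 'I_n}) : (elem s \in T) = (elem 1 \in T).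
Proof.
by rewrite -(pow_part s (#[s]).-1) prednK ?order_gt0 // expg_order.
Qed.

Lemma conj_e a g h : a \in Istar n -> (a \in T) = (elem 1 \in T) ->
  (dmul (dmul (elem g) a) (elem h) \in T) = (elem 1 \in T).
Proof.
move=> aI e.
have e1 : (dmul (elem g) a \in T) = (elem 1 \in T).
  by rewrite mul_part ?elem_Istar // ?unit_part // e.
by rewrite mul_part ?dmul_Istar ?elem_Istar // e1 unit_part.
Qed.

Lemma conj_part a g : a \in Istar n -> (cj g a \in T) = (a \in T).
Proof.
move=> aI; case: (boolP ((a \in T) == (elem 1 \in T))) => [/eqP e|ne].
  by rewrite /cj conj_e.
have cI : cj g a \in Istar n by apply: conj_Istar.
case: (boolP ((cj g a \in T) == (elem 1 \in T))) => [/eqP e|ne2].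
  have := conj_e (g^-1) g cI e.
  rewrite /cj conj_inv ?Istar_part // => e2; by rewrite e2 eqxx in ne.
by move: ne ne2; case: (a \in T); case: (cj g a \in T); case: (elem 1 \in T).
Qed.

Lemma nonunit_part a : a \in Istar n -> a \notin Sn n -> (z0 n \in T) = (a \in T).
Proof.
move=> aI aS.
suff H : forall m x, x \in Istar n -> mu x <= m -> (x \in T) = (a \in T) ->
  (z0 n \in T) = (a \in T) by apply: (H _ a aI (leqnn _)).
elim=> [|m IH] x xI.
  by rewrite leqn0 => /eqP /(mu0 xI) ->.
rewrite leq_eqVlt => /orP [/eqP hm|hm]; last by apply: IH.
move=> ex; have hpos : 0 < mu x by rewrite hm.
have [g hg] := reduce xI aI aS hpos.
apply: (IH (dmul x (cj g a))); first by rewrite dmul_Istar ?conj_Istar.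
  by rewrite -ltnS -hm.
by rewrite mul_part ?conj_Istar // conj_part.
Qed.

End Part.

Theorem main (n : nat) (hn : 2 <= n) (T : {set {set {set pt n}}}) :
  completely_isolated T <->
  (T = Istar n \/ T = Sn n \/ T = Istar n :\: Sn n).
Proof.
have n0 : 0 < n by apply: ltnW.
have zI := z0_Istar n0; have zS := z0_Sn hn.
split.
  case=> [[TI [Tn0 Tmul]] Tiso].
  have HS : forall P, P \in Sn n -> (P \in T) = (elem 1%g \in T).
    by move=> P /SnP [s ->]; apply: unit_part.
  have HN : forall P, P \in Istar n -> P \notin Sn n -> (P \in T) = (z0 n \in T).
    by move=> P PI PS; rewrite (nonunit_part Tmul Tiso PI PS).
  have TP : forall P, P \in T -> P \in Istar n by move=> P; apply/subsetP.
  case e1: (elem 1%g \in T); case e2: (z0 n \in T).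
  - left; apply/setP => P; apply/idP/idP; first exact: TP.
    by move=> PI; case: (boolP (P \in Sn n)) => [/HS|/(HN _ PI)] ->.
  - right; left; apply/setP => P; apply/idP/idP.
      move=> PT; apply/negPn/negP => PS; have := HN P (TP _ PT) PS; by rewrite PT e2.
    by move/HS => ->.
  - right; right; apply/setP => P; rewrite inE; apply/idP/idP.
      move=> PT; rewrite TP // andbT; apply/negP => /HS; by rewrite PT e1.
    by case/andP => PS PI; rewrite HN.
  - exfalso; case/set0Pn: Tn0 => P PT.
    case: (boolP (P \in Sn n)) => PS; [have := HS P PS | have := HN P (TP _ PT) PS]; by rewrite PT ?e1 ?e2.
have SI : forall P, P \in Sn n -> P \in Istar n by move=> P; apply: Sn_Istar.
case=> [->|[->|->]].
- split; first split => //.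
    split; first by apply/set0Pn; exists (z0 n).
    by move=> a b; apply: dmul_Istar.
  by move=> a b aI _ _; left.
- split; first split; first by apply/subsetP.
    split; first by apply/set0Pn; exists (elem 1%g); apply/SnP; exists 1%g.
    by move=> a b /SnP [s ->] /SnP [t ->]; rewrite elem_mul; apply/SnP; exists (s * t)%g.
  by move=> a b aI bI ab; left; apply: unit_l ab.
- split; first split; first by apply/subsetP => P; rewrite inE => /andP[].
    split; first by apply/set0Pn; exists (z0 n); rewrite in_setD zS zI.
    move=> a b; rewrite !in_setD => /andP [aS aI] /andP [bS bI].
    rewrite dmul_Istar // andbT; apply: contra aS; exact: unit_l.
  move=> a b aI bI; rewrite !in_setD aI bI !andbT => abS.
  case: (boolP (a \in Sn n)) => aS; last by left.
  case: (boolP (b \in Sn n)) => bS; last by right.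
  move: abS; move: aS bS => /SnP [s ->] /SnP [t ->]; rewrite elem_mul => /andP [/negP h _].
  by exfalso; apply: h; apply/SnP; exists (s * t)%g.
Qed.

Theorem mainTheorem8 (n : nat) (hn : 2 <= n) (T : {set {set {set pt n}}}) :
  completely_isolated T <->
  (T = Istar n \/ T = Sn n \/ T = Istar n :\: Sn n).
Proof. exact: main. Qed.
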